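(* Let $p\ge 1$ and let $y_1,y_2\in\mathbb{R}^p$ be two distinct points with $d=\|y_1-y_2\|_2>0$. Let $\lambda>0$, $\delta>0$ and put $\eta=\lambda\delta$. Consider the iterates $(\theta_1^{(t)},\theta_2^{(t)})_{t\ge 0}$ of the MM algorithm described in the context, started at $\theta_1^{(0)}=y_1$, $\theta_2^{(0)}=y_2$. Let $\phi\in(0,1)$. (i) If $\eta>d$ and $$\lambda=\frac{2\phi\,\eta\, d}{(1-\phi)(\eta-d)},$$ then $\|\theta_1^{(1)}-\theta_2^{(0)}\|_2=(1-\phi)\,\|\theta_1^{(0)}-\theta_2^{(0)}\|_2$. (ii) If $\eta\le d$, then $\theta_i^{(t)}=y_i$ for all $t\ge 1$ and $i=1,2$.
   Context: The minimax concave penalty (MCP) with parameters $\lambda>0$, $\delta>0$ is $\rho(t)=\int_0^t(1-\frac{x}{\lambda\delta})_+\,dx$ for $t\ge 0$, so $\rho'(t)=(1-t/(\lambda\delta))_+$. For two observations $y_1,y_2$ one minimizes $\ell(\theta_1,\theta_2)=\|y_1-\theta_1\|_2^2+\|y_2-\theta_2\|_2^2+\lambda\rho(\|\theta_1-\theta_2\|_2)$ by the following blockwise MM (majorization–minimization) iteration, defined as long as the two current centers are distinct. Given $(\theta_1^{(t)},\theta_2^{(t)})$, first set $$w_1^{(t)}=\frac{\bigl(1-\|\theta_1^{(t)}-\theta_2^{(t)}\|_2/(\lambda\delta)\bigr)_+}{2\|\theta_1^{(t)}-\theta_2^{(t)}\|_2},\qquad \theta_1^{(t+1)}=\frac{y_1+\lambda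 w_1^{(t)}\theta_2^{(t)}}{1+\lambda w_1^{(t)}},$$ and then, with $\theta_1$ fixed at its new value, $$w_2^{(t)}=\frac{\bigl(1-\|\theta_2^{(t)}-\theta_1^{(t+1)}\|_2/(\lambda\delta)\bigr)_+}{2\|\theta_2^{(t)}-\theta_1^{(t+1)}\|_2},\qquad \theta_2^{(t+1)}=\frac{y_2+\lambda w_2^{(t)}\theta_1^{(t+1)}}{1+\lambda w_2^{(t)}}.$$ *)

(* Defs.v *)
(* R is an abstract real closed field (covers the reals). *)
From HB Require Import structures.
From mathcomp Require Import all_boot all_order all_algebra.
Set Implicit Arguments. Unset Strict Implicit. Unset Printing Implicit Defensive.
Import Order.TTheory GRing.Theory Num.Theory.
Local Open Scope ring_scope.

Definition norm2 {R : rcfType} {p : nat} (v : 'rV[R]_p) : R :=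
  Num.sqrt (\sum_(i < p) (v ord0 i) ^+ 2).

Definition pospart {R : rcfType} (x : R) : R := Num.max x 0.

Definition mm_weight {R : rcfType} (lam delta a : R) : R :=
  pospart (1 - a / (lam * delta)) / (2 * a).

Definition mm_step {R : rcfType} {p : nat} (lam delta : R) (y1 y2 : 'rV[R]_p)
    (th : 'rV[R]_p * 'rV[R]_p) : 'rV[R]_p * 'rV[R]_p :=
  let t1 := th.1 in let t2 := th.2 in
  let w1 := mm_weight lam delta (norm2 (t1 - t2)) in
  let t1' := (1 + lam * w1)^-1 *: (y1 + (lam * w1) *: t2) in
  let w2 := mm_weight lam delta (norm2 (t2 - t1')) in
  let t2' := (1 + lam * w2)^-1 *: (y2 + (lam * w2) *: t1') in
  (t1', t2').

Definition mm_iter {R : rcfType} {p : nat} (lam delta : R) (y1 y2 : 'rV[R]_p)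
    (t : nat) : 'rV[R]_p * 'rV[R]_p :=
  iter t (mm_step lam delta y1 y2) (y1, y2).

(* Main.v *)
Require Import Defs.
From HB Require Import structures.
From mathcomp Require Import all_boot all_order all_algebra.
From mathcomp Require Import ring lra.
Import Order.TTheory GRing.Theory Num.Theory.
Local Open Scope ring_scope.

Lemma norm2Z (R : rcfType) (p : nat) (c : R) (v : 'rV[R]_p) :
  norm2 (c *: v) = `|c| * norm2 v.
Proof.
rewrite /norm2.
under eq_bigr do rewrite mxE exprMn.
by rewrite -mulr_sumr sqrtrM ?sqr_ge0 // sqrtr_sqr.
Qed.

Lemma norm2N (R : rcfType) (p : nat) (v : 'rV[R]_p) :
  norm2 (- v) = norm2 v.
Proof. by rewrite -scaleN1r norm2Z normrN normr1 mul1r. Qed.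

Lemma norm2_ge0 (R : rcfType) (p : nat) (v : 'rV[R]_p) : 0 <= norm2 v.
Proof. exact: sqrtr_ge0. Qed.

Theorem lemma1 (R : rcfType) (p : nat) (y1 y2 : 'rV[R]_p)
    (lam delta phi : R) :
  (0 < p)%N -> y1 != y2 -> 0 < lam -> 0 < delta -> 0 < phi < 1 ->
  let d := norm2 (y1 - y2) in
  let eta := lam * delta in
  let th := mm_iter lam delta y1 y2 in
  (d < eta ->
     lam = 2 * phi * eta * d / ((1 - phi) * (eta - d)) ->
     norm2 ((th 1%N).1 - (th 0%N).2) = (1 - phi) * norm2 ((th 0%N).1 - (th 0%N).2))
  /\
  (eta <= d -> forall t : nat, (1 <= t)%N -> (th t).1 = y1 /\ (th t).2 = y2).
Proof.
move=> _ _ lam0 del0 /andP[phi0 phi1] d eta th.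
have d0 : 0 <= d by exact: norm2_ge0.
have eta0 : 0 < eta by rewrite mulr_gt0.
split.
- move=> deta hlam.
  rewrite /th /mm_iter /= /mm_step /=.
  set w := mm_weight lam delta (norm2 (y1 - y2)).
  have hw : w = (1 - d / eta) / (2 * d).
    rewrite /w /mm_weight /pospart -/d -/eta.
    have : 0 <= 1 - d / eta.
      by rewrite subr_ge0 ler_pdivrMr // mul1r ltW.
    by move=> h; rewrite max_l.
  have dne0 : d != 0.
    apply/negP => /eqP d00; move: hlam; rewrite d00 !mulr0 mul0r => l0.
    by move: lam0; rewrite l0 ltxx.
  have dpos : 0 < d by rewrite lt0r dne0.
  have lw : lam * w = phi / (1 - phi).
    rewrite hw {1}hlam; field.
    rewrite lt0r_neq0 ?subr_gt0 // lt0r_neq0 // lt0r_neq0 // lt0r_neq0 //.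
    by rewrite subr_gt0.
  rewrite lw.
  have e : (1 + phi / (1 - phi))^-1 *: (y1 + (phi / (1 - phi)) *: y2) - y2
           = (1 - phi) *: (y1 - y2).
    have hinv : (1 + phi / (1 - phi))^-1 = 1 - phi.
      have h1 : 1 - phi != 0 by rewrite lt0r_neq0 // subr_gt0.
      rewrite -[1 - phi]invrK; congr (_^-1); field => //.
    rewrite hinv scalerDr scalerA.
    have -> : (1 - phi) * (phi / (1 - phi)) = phi.
      by field; rewrite lt0r_neq0 // subr_gt0.
    rewrite scalerBr -addrA; congr (_ + _); by rewrite scalerBl scale1r opprB.
  rewrite e norm2Z ger0_norm // subr_ge0 ltW //.
- move=> ed.
  have wz : forall a, eta <= a -> mm_weight lam delta a = 0.
    move=> a ha; rewrite /mm_weight /pospart -/eta max_r ?mul0r //.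
    by rewrite subr_le0 ler_pdivlMr // mul1r.
  have fix1 : mm_step lam delta y1 y2 (y1, y2) = (y1, y2).
    rewrite /mm_step /= wz // !mulr0 addr0 invr1 !scale0r !addr0 !scale1r.
    by rewrite wz ?mulr0 ?addr0 ?invr1 ?scale0r ?addr0 ?scale1r //
       -opprB norm2N.
  move=> t _; rewrite /th /mm_iter.
  have -> : iter t (mm_step lam delta y1 y2) (y1, y2) = (y1, y2).
    by elim: t => //= t ->.
  by [].
Qed.
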